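(* Let $\{F_n\}_{n\geq 0}$ be a sequence of positive integers with $F_0=1$, and let $\Pi$ be the cobweb poset it determines. Let $\mu$ denote the M\''obius function of $\Pi$, and let $0=\langle 1,0\rangle$ be its unique minimal element. For $k\geq 0$ define the Whitney number of the first kind $w_k(\Pi)=\sum_{x\in\Pi,\ r(x)=k}\mu(0,x)$. Then $$w_0(\Pi)=1,\qquad w_k(\Pi)=F_k\cdot(-1)^k\prod_{i=1}^{k-1}(F_i-1)\quad (k>0).$$ The same formulas hold for the Whitney numbers of the first kind $w_k(P_n)=\sum_{x\in P_n,\ r(x)=k}\mu_{P_n}(0,x)$ of every finite cobweb subposet $P_n$, $n\geq 0$, for $0\leq k\leq n$.
   Context: Cobweb poset: given the sequence $\{F_n\}_{n\ge 0}$, for $s\geq 0$ let the $s$-th level be $\Phi_s=\{\langle j,s\rangle : 1\leq j\leq F_s\}$, and let $V=\bigcup_{s\geq 0}\Phi_s$. The cobweb poset is $\Pi=(V,\leq)$ where for $x=\langle s,t\rangle$, $y=\langle u,v\rangle$ one has $x\leq y$ iff ($t<v$) or ($t=v$ and $s=u$). Its rank function is $r(x)=s$ for $x\in\Phi_s$; $\langle 1,0\rangle$ is its unique minimal element. For $n\geq 0$ the finite cobweb subposet $P_n$ is $V_n=\bigcup_{0\leq s\leq n}\Phi_s$ with the order induced from $\Pi$. The empty product (for $k=1$) equals $1$. *)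

(* Defs.v *)
From mathcomp Require Import all_boot all_order all_algebra.
Set Implicit Arguments. Unset Strict Implicit. Unset Printing Implicit Defensive.
Import GRing.Theory Num.Theory.

(* A locally finite poset is given by its order relation [le] on a carrier
   [T] together with [itv x y], an enumeration of the (finite) interval
   [x, y] = { z | x <= z <= y }.
   The recursion is run with fuel; the fuel [size (itv x y)] is always
   sufficient, since for x <= z < y the interval [x,z] is strictly smaller
   than [x,y]. *)
Fixpoint mobius_fuel (T : eqType) (le : rel T) (itv : T -> T -> seq T)
    (n : nat) (x y : T) : int :=
  match n with
  | 0 => 0
  | n'.+1 =>
      if x == y then 1
      else if le x y then
        - \sum_(z <- itv x y | z != y) mobius_fuel le itv n' x z
      else 0
  end%R.

Definition mobius (T : eqType) (le : rel T) (itv : T -> T -> seq T)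
    (x y : T) : int :=
  mobius_fuel le itv (size (itv x y)) x y.

(* A vertex <j, s> is encoded as the pair (j, s) : nat * nat. *)

Definition level (F : nat -> nat) (s : nat) : seq (nat * nat) :=
  [seq (j, s) | j <- iota 1 (F s)].

Definition Vn (F : nat -> nat) (n : nat) : seq (nat * nat) :=
  flatten [seq level F s | s <- iota 0 n.+1].

Definition cobweb_le (x y : nat * nat) : bool :=
  (x.2 < y.2) || (x == y).

Definition rank (x : nat * nat) : nat := x.2.

Definition cobweb_zero : nat * nat := (1, 0).

(* Intervals of the whole cobweb poset Pi: every z <= y lies in
   V_{r(y)}, so [x,y] = { z in V_{r(y)} | x <= z <= y }. *)
Definition itv_Pi (F : nat -> nat) (x y : nat * nat) : seq (nat * nat) :=
  [seq z <- Vn F (rank y) | cobweb_le x z && cobweb_le z y].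

Definition itv_P (F : nat -> nat) (n : nat) (x y : nat * nat)
    : seq (nat * nat) :=
  [seq z <- Vn F n | cobweb_le x z && cobweb_le z y].

Definition mu_Pi (F : nat -> nat) := mobius cobweb_le (itv_Pi F).
Definition mu_P (F : nat -> nat) (n : nat) := mobius cobweb_le (itv_P F n).

Definition whitney_Pi (F : nat -> nat) (k : nat) : int :=
  (\sum_(x <- level F k) mu_Pi F cobweb_zero x)%R.

Definition whitney_P (F : nat -> nat) (n k : nat) : int :=
  (\sum_(x <- level F k) mu_P F n cobweb_zero x)%R.

(* Main.v *)
Require Import Defs.
From mathcomp Require Import all_boot all_order all_algebra.
Import GRing.Theory Num.Theory.
From mathcomp Require Import zify ring.

Definition mm (F : nat -> nat) (k : nat) : int :=
  ((-1) ^+ k * \prod_(1 <= i < k) ((F i)%:Z - 1))%R.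

Lemma mem_level F s z : (z \in level F s) = (z.2 == s) && (0 < z.1 <= F s).
Proof.
case: z => a b /=; apply/mapP/andP => [[j]|[/eqP -> H]].
  by rewrite mem_iota => /andP[H1 H2] [-> ->]; split => //; apply/andP; lia.
by exists a => //; rewrite mem_iota; lia.
Qed.

Lemma mem_Vn F n z : (z \in Vn F n) = (z.2 <= n) && (0 < z.1 <= F z.2).
Proof.
apply/flatten_mapP/andP => [[s]|[H1 H2]].
  by rewrite mem_iota mem_level => /andP[_ Hs] /andP[/eqP -> H]; split => //; lia.
by exists z.2; rewrite ?mem_iota ?mem_level ?eqxx //=; lia.
Qed.

Lemma sum_level F s (G : nat -> int) :
  (\sum_(z <- level F s) G z.2 = G s *+ F s)%R.
Proof.
rewrite /level big_map.
have -> : iota 1 (F s) = index_iota 1 (F s).+1 by rewrite /index_iota subSS subn0.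
by rewrite (eq_bigr (fun=> G s)) // sumr_const_nat subSS subn0.
Qed.

Lemma mm_rec F (F0 : F 0 = 1) k : 0 < k ->
  (\sum_(0 <= s < k) mm F s *+ F s = - mm F k)%R.
Proof.
elim: k => [//|[|k] IH] _.
  by rewrite big_nat1 F0 /mm !big_geq // expr0 expr1 !mulr1.
rewrite big_nat_recr //= IH // /mm [in RHS]big_nat_recr //=.
rewrite -mulr_natr natz (exprS _ k.+1); ring.
Qed.

Lemma mob_val F (F_pos : forall n, 0 < F n) (F0 : F 0 = 1)
  (itv : nat * nat -> nat * nat -> seq (nat * nat)) N
  (Hitv : forall y, y.2 <= N -> itv cobweb_zero y =
     [seq z <- Vn F y.2 | cobweb_le cobweb_zero z && cobweb_le z y]) :
  forall f y, y.2 < f -> y.2 <= N -> 0 < y.1 <= F y.2 ->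
  mobius_fuel cobweb_le itv f cobweb_zero y = mm F y.2.
Proof.
elim=> [//|f IH] [a k] /= Hf HN Hy.
case: k Hf HN Hy => [|k] Hf HN Hy.
  rewrite F0 in Hy; have -> : a = 1 by lia.
  by rewrite eqxx /mm expr0 big_geq.
rewrite (_ : (cobweb_zero == (a, k.+1)) = false); last by rewrite xpair_eqE andbF.
rewrite (_ : cobweb_le cobweb_zero (a, k.+1) = true) //.
rewrite Hitv //= big_filter_cond big_seq_cond.
rewrite (eq_bigr (fun z => mm F z.2)); last first.
  move=> [b c] /andP[]; rewrite mem_Vn /= => /andP[Hc Hb].
  rewrite /cobweb_le /= !xpair_eqE => /andP[/andP[_ H1] H2].
  apply: IH => //=; lia.
rewrite -big_seq_cond /Vn big_flatten big_map.
have -> : iota 0 k.+2 = index_iota 0 k.+2 by [].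
rewrite big_nat_recr //= [X in (_ + X)%R]big1_seq ?addr0; last first.
  move=> [b c]; rewrite andbC mem_level /cobweb_le /= !xpair_eqE; lia.
rewrite (eq_big_nat _ _ (F2 := fun s => mm F s *+ F s)%R).
  by rewrite mm_rec // opprK.
move=> s Hs; rewrite -big_filter (all_filterP _) ?sum_level //.
apply/allP => [[b c]]; rewrite mem_level /cobweb_le /= !xpair_eqE.
move=> /and3P[/eqP -> H1 H2]; case: s Hs H2 => [|s] Hs H2; [rewrite F0 in H2|]; lia.
Qed.

Lemma itv_size F (F_pos : forall n, 0 < F n) (F0 : F 0 = 1) y : 0 < y.1 <= F y.2 ->
  y.2 < size [seq z <- Vn F y.2 | cobweb_le cobweb_zero z && cobweb_le z y].
Proof.
move=> Hy.
have H := @uniq_leq_size _ (y :: [seq (1, s) | s <- iota 0 y.2])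
  [seq z <- Vn F y.2 | cobweb_le cobweb_zero z && cobweb_le z y].
rewrite /= size_map size_iota in H; apply: H.
  rewrite /= map_inj_uniq ?iota_uniq ?andbT; last by move=> a b [].
  apply/mapP => [[s]]; rewrite mem_iota => Hs Hys.
  by move: Hs; rewrite Hys /=; lia.
have Fp := F_pos.
move=> z; rewrite inE => /orP[/eqP ->|/mapP[s]].
  rewrite mem_filter mem_Vn /cobweb_le /cobweb_zero eqxx !orbT andbT Hy andbT.
  case: y Hy => [a [|k]] /=; rewrite ?xpair_eqE ?F0 /=; lia.
rewrite mem_iota => Hs ->.
rewrite mem_filter mem_Vn /cobweb_le /cobweb_zero /= !xpair_eqE.
move: (Fp s); lia.
Qed.

Lemma itvP_eq F n y : y.2 <= n -> itv_P F n cobweb_zero y =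
  [seq z <- Vn F y.2 | cobweb_le cobweb_zero z && cobweb_le z y].
Proof.
move=> Hn; rewrite /itv_P /Vn.
have -> : n.+1 = y.2.+1 + (n - y.2) by lia.
rewrite iotaD map_cat flatten_cat filter_cat.
rewrite [X in _ ++ X](eq_in_filter (a2 := pred0)) ?filter_pred0 ?cats0 //.
move=> z /flatten_mapP [s]; rewrite mem_iota mem_level => Hs /andP[/eqP Hz _].
rewrite /cobweb_le; case: z Hz => b c; case: y Hn Hs => a d /= Hn Hs Hz.
rewrite !xpair_eqE /=; lia.
Qed.

Lemma whit F (F_pos : forall n, 0 < F n) (F0 : F 0 = 1) itv k
  (Hitv : forall y, y.2 <= k -> itv cobweb_zero y =
     [seq z <- Vn F y.2 | cobweb_le cobweb_zero z && cobweb_le z y]) :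
  (\sum_(x <- level F k) mobius cobweb_le itv cobweb_zero x = mm F k *+ F k)%R.
Proof.
rewrite big_seq (eq_bigr (fun x => mm F x.2)) -?big_seq ?sum_level //.
move=> x; rewrite mem_level => /andP[/eqP Hx H].
rewrite /mobius; apply: (@mob_val F F_pos F0 itv k) => //; rewrite ?Hx //.
by rewrite Hitv ?Hx // -Hx; apply: itv_size => //; rewrite Hx.
Qed.

Theorem mainTheorem1 (F : nat -> nat) (F_pos : forall n, 0 < F n)
    (F0 : F 0 = 1) :
  (whitney_Pi F 0 = 1%R /\
   forall k, 0 < k ->
     whitney_Pi F k =
       ((F k)%:Z * (-1) ^+ k * \prod_(1 <= i < k) ((F i)%:Z - 1))%R) /\
  (forall n,
     whitney_P F n 0 = 1%R /\
     forall k, 0 < k -> k <= n ->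
       whitney_P F n k =
         ((F k)%:Z * (-1) ^+ k * \prod_(1 <= i < k) ((F i)%:Z - 1))%R).
Proof.
have E k : (mm F k *+ F k = (F k)%:Z * (-1) ^+ k * \prod_(1 <= i < k) ((F i)%:Z - 1))%R.
  by rewrite -mulr_natl natz /mm mulrA.
have E0 : (mm F 0 *+ F 0 = 1)%R by rewrite F0 /mm expr0 big_geq.
have HPi k : whitney_Pi F k = (mm F k *+ F k)%R.
  by rewrite /whitney_Pi /mu_Pi (@whit F F_pos F0 _ k).
have HP n k : k <= n -> whitney_P F n k = (mm F k *+ F k)%R.
  move=> Hk; rewrite /whitney_P /mu_P (@whit F F_pos F0 _ k) // => y Hy.
  by apply: itvP_eq; lia.
split; first by split => [|k _]; rewrite HPi.
by move=> n; split => [|k _ Hk]; rewrite HP.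
Qed.
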